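(* Let $T$ be a negative subset and $W$ a positive subset of $\mathbb{N}^2$. If a nonvanishing nonempty finite multiset $U$ on $\mathbb{N}^2$ is bounded by $T,W$, then $\mathrm{BRSK}(U)$ is bounded by $T,W$.
   Context: $\mathbb{N}$ = positive integers. For a finite multiset $U$ on $\mathbb{N}^2$, $U_{(1)}$ and $U_{(2)}$ are the multisets of first and second coordinates; $U$ is negative/positive/nonvanishing if each element $(a,b)$ has $a<b$ / $a>b$ / $a\neq b$; $U^-$, $U^+$ are the negative and positive sub-multisets; $\iota$ swaps coordinates. For equal-size finite multisets of $\mathbb{N}$, $A\le B$ iff the sorted entries satisfy $a_i\le b_i$; $A\lessdot B$ iff $A,B$ nonempty and $a_i<b_i$. For finite multisets with $|A|+|D|=|B|+|C|$, ''$A-C\le B-D$'' means $A\sqcup D\le B\sqcup C$. For multisets $U,V$ on $\mathbb{N}^2$, $U\le V$ means $U_{(1)}-U_{(2)}\le V_{(1)}-V_{(2)}$. A chain is a subset $\{(e_1,f_1),\dots,(e_m,f_m)\}$ of $\mathbb{N}^2$ with $e_1<\dots<e_m$ and $f_1>\dots>f_m$. A nonempty multiset $U$ on $\mathbb{N}^2$ is bounded by $T,W$ if $T\le C\le W$ for every chain $C$ contained in the underlying set of $U$. A semistandard notched bitableau $(P,Q)$ with rows $P_1,\dots,P_r$, $Q_1,\dots,Q_r$ is bounded by $T,W$ if $T_{(1)}-T_{(2)}\le P_1-Q_1$ and $P_r-Q_r\le W_{(1)}-W_{(2)}$. Notched tableau: finite sequence of left-justified, possibly empty rows of positive integers; row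 strict if rows strictly increase (rows identified with entry sets). Notched bitableau: two notched tableaux of the same shape. $(P,Q)$ semistandard: row strict and $P_1-Q_1\le\dots\le P_r-Q_r$. $\iota(P,Q)$ = rows of $(Q,P)$ in reversed order. BRSK: a row-strict $P$ is semistandard on $b$ if $P^{<b}$ (entries $\ge b$ deleted) has weakly decreasing row lengths and weakly increasing columns; $P\xleftarrow{b}a$ ($a<b$): remove entries $\ge b$, row-insert $a$ (append at the end of a row if larger than all its entries and stop; else replace the smallest entry $\ge a$ and insert the replaced entry into the next row; a row below the last is empty; the last added box is the new box), then restore the removed entries at the right ends of their rows. For negative $U=\{(a_1,b_1),\dots,(a_t,b_t)\}$ listed with $b_1\ge\dots\ge b_t$ and $a_i\ge a_{i+1}$ when $b_i=b_{i+1}$: from the empty pair, $P^{(i+1)}=P^{(i)}\xleftarrow{b_{i+1}}a_{i+1}$, and $b_{i+1}$ is placed at the left end of row $j$ of $Q^{(i)}$, $j$ the row of the new box; $\mathrm{BRSK}(U)=(P^{(t)},Q^{(t)})$. For positive $U$, $\mathrm{BRSK}(U)=\iota(\mathrm{BRSK}(\iota U))$; for nonvanishing $U$, $\mathrm{BRSK}(U)$ has the rows of $\mathrm{BRSK}(U^-)$ followed by the rows of $\mathrm{BRSK}(U^+)$. *)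

(* Defs.v *)
(* Multisets are represented by sequences (order irrelevant);
   N = positive integers is enforced by explicit positivity hypotheses. *)
From mathcomp Require Import all_boot.
Set Implicit Arguments. Unset Strict Implicit. Unset Printing Implicit Defensive.

(* A <= B for equal-size finite multisets: sorted entries a_i <= b_i
   (all2 also forces size A = size B). *)
Definition mle (A B : seq nat) : bool :=
  all2 leq (sort leq A) (sort leq B).

(* "A - C <= B - D" means A ⊔ D <= B ⊔ C. *)
Definition mdiff_le (A C B D : seq nat) : bool := mle (A ++ D) (B ++ C).

Definition fstm (U : seq (nat * nat)) : seq nat := map fst U.
Definition sndm (U : seq (nat * nat)) : seq nat := map snd U.

Definition pos_entries (U : seq (nat * nat)) : bool :=
  all (fun p => (0 < p.1) && (0 < p.2)) U.

Definition negative (U : seq (nat * nat)) : bool := all (fun p => p.1 < p.2) U.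
Definition positive (U : seq (nat * nat)) : bool := all (fun p => p.2 < p.1) U.
Definition nonvanishing (U : seq (nat * nat)) : bool := all (fun p => p.1 != p.2) U.

Definition neg_part (U : seq (nat * nat)) := filter (fun p => p.1 < p.2) U.
Definition pos_part (U : seq (nat * nat)) := filter (fun p => p.2 < p.1) U.

Definition swap_pt (p : nat * nat) : nat * nat := (p.2, p.1).
Definition iota_ms (U : seq (nat * nat)) := map swap_pt U.

Definition mle2 (U V : seq (nat * nat)) : bool :=
  mdiff_le (fstm U) (sndm U) (fstm V) (sndm V).

(* A chain, listed as (e_1,f_1),...,(e_m,f_m) with e increasing, f decreasing
   (this listing determines the set uniquely). *)
Definition chain_rel (x y : nat * nat) : bool := (x.1 < y.1) && (y.2 < x.2).
Definition is_chain (C : seq (nat * nat)) : bool := sorted chain_rel C.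

Definition bounded_ms (T W U : seq (nat * nat)) : Prop :=
  forall C : seq (nat * nat), is_chain C -> {subset C <= U} ->
    mle2 T C /\ mle2 C W.

Definition tableau := seq (seq nat).
Definition bitableau := (tableau * tableau)%type.

Definition bounded_bt (T W : seq (nat * nat)) (PQ : bitableau) : Prop :=
  mdiff_le (fstm T) (sndm T) (head [::] PQ.1) (head [::] PQ.2) /\
  mdiff_le (last [::] PQ.1) (last [::] PQ.2) (fstm W) (sndm W).

Definition iota_bt (PQ : bitableau) : bitableau := (rev PQ.2, rev PQ.1).

(* Row insertion of a into a tableau: returns the new tableau and the
   (0-based) row index of the new box. *)
Fixpoint row_ins (a : nat) (P : tableau) : tableau * nat :=
  match P with
  | [::] => ([:: [:: a]], 0)
  | r :: P' =>
      if all (fun x => x < a) r then (rcons r a :: P', 0)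
      else
        let k := find (fun x => a <= x) r in
        let y := nth 0 r k in
        let r' := set_nth 0 r k a in
        let (P'', j) := row_ins y P' in (r' :: P'', j.+1)
  end.

Definition ins_b (b a : nat) (P : tableau) : tableau * nat :=
  let lo := map (filter (fun x => x < b)) P in
  let hi := map (filter (fun x => b <= x)) P in
  let (L, j) := row_ins a lo in
  ([seq nth [::] L i ++ nth [::] hi i | i <- iota 0 (size L)], j).

Definition brsk_order (x y : nat * nat) : bool :=
  (y.2 < x.2) || ((x.2 == y.2) && (y.1 <= x.1)).

Definition brsk_step (PQ : bitableau) (p : nat * nat) : bitableau :=
  let (a, b) := p in
  let (P', j) := ins_b b a PQ.1 in
  (P', set_nth [::] PQ.2 j (b :: nth [::] PQ.2 j)).

Definition brsk_neg (U : seq (nat * nat)) : bitableau :=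
  foldl brsk_step ([::], [::]) (sort brsk_order U).

Definition brsk_pos (U : seq (nat * nat)) : bitableau :=
  iota_bt (brsk_neg (iota_ms U)).

Definition brsk (U : seq (nat * nat)) : bitableau :=
  let PQm := brsk_neg (neg_part U) in
  let PQp := brsk_pos (pos_part U) in
  (PQm.1 ++ PQp.1, PQm.2 ++ PQp.2).

(* Main.v *)
Require Import Defs.
From mathcomp Require Import all_boot zify.

Definition cnt k (s : seq nat) := count (fun x => k <= x) s.

Lemma cnt_cat k s t : cnt k (s ++ t) = cnt k s + cnt k t.
Proof. exact: count_cat. Qed.

Lemma all2_cnt s t : all2 leq s t -> forall k, cnt k s <= cnt k t.
Proof.
elim: s t => [|x s IH] [|y t] //= /andP[xy st] k.
have := IH _ st k; rewrite /cnt /=.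
move: (count _ s) (count _ t) => m n.
case: (leqP k x) => kx; case: (leqP k y) => ky /=; lia.
Qed.

Lemma cnt_sort k s : cnt k (sort leq s) = cnt k s.
Proof. by rewrite /cnt; have /permP -> := permEl (perm_sort leq s). Qed.

Lemma mle_cnt A B : mle A B -> forall k, cnt k A <= cnt k B.
Proof. by move=> H k; rewrite -(cnt_sort k A) -(cnt_sort k B); apply: all2_cnt. Qed.

Lemma cnt_all k s : all (fun x => k <= x) s -> cnt k s = size s.
Proof. by rewrite all_count => /eqP. Qed.

Lemma cnt_all0 k s : all (fun x => x < k) s -> cnt k s = 0.
Proof. elim: s => //= x s IH /andP[h1 h2]; rewrite /cnt /= leqNgt h1 /=; exact: IH. Qed.

Lemma cnt_size k s : cnt k s <= size s.
Proof. exact: count_size. Qed.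

Lemma all2_of_cnt s t : sorted leq s -> sorted leq t -> size s = size t ->
  (forall k, cnt k s <= cnt k t) -> all2 leq s t.
Proof.
elim: s t => [|x s IH] [|y t] //= ps pt [] sz H.
have As : all (leq x) s by apply: order_path_min => //; exact: leq_trans.
have At : all (leq y) t by apply: order_path_min => //; exact: leq_trans.
have xy : x <= y.
  have := H x; rewrite /cnt /= leqnn.
  rewrite -/(cnt x s) -/(cnt x t) cnt_all //.
  have := cnt_size x t; move: (cnt x t) => n.
  case: leqP => //= yx; lia.
rewrite xy /=; apply: IH => //; first exact: path_sorted ps; first exact: path_sorted pt.
move=> k; have := H k; rewrite /cnt /= -/(cnt k s) -/(cnt k t).
case: (leqP k x) => kx.
  rewrite (@cnt_all k s); last by apply/allP => z zs; have := allP As z zs; lia.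
  have := cnt_size k t; move: (cnt k t) => n; case: (k <= y) => /=; lia.
case: (leqP k y) => ky /=.
  rewrite (@cnt_all k t); last by apply/allP => z zs; have := allP At z zs; lia.
  have := cnt_size k s; move: (cnt k s) => n; lia.
move: (cnt k s) (cnt k t) => m n; lia.
Qed.

Lemma cnt_mle A B : size A = size B -> (forall k, cnt k A <= cnt k B) -> mle A B.
Proof.
move=> sz H; apply: all2_of_cnt; try exact: (sort_sorted leq_total).
  by rewrite !size_sort.
by move=> k; rewrite !cnt_sort.
Qed.

Lemma set_nth_size (T : Type) (x0 : T) s y : set_nth x0 s (size s) y = rcons s y.
Proof. by elim: s => //= x s ->. Qed.

Lemma all_set_nth (T : Type) (q : pred T) x0 s n y :
  all q s -> q y -> n <= size s -> all q (set_nth x0 s n y).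
Proof.
elim: s n => [|x s IH] [|n] //=; first by move=> _ ->.
  by move=> /andP[qx qs] qy ltn; rewrite ?qy ?qs ?qx //=.
by move=> /andP[qx qs] qy ltn; rewrite qx /=; apply: IH.
Qed.

Lemma row_ins_size a P :
  size (row_ins a P).1 = maxn (size P) (row_ins a P).2.+1 /\ (row_ins a P).2 <= size P.
Proof.
elim: P a => [|r P IH] a //=.
case: ifP => _ /=; first by split => //; lia.
case E: (row_ins _ P) => [L j] /=; have := IH (nth 0 r (find (fun x => a <= x) r)).
rewrite E /= => -[-> h]; split; lia.
Qed.

Lemma find_lt a r : ~~ all (fun x => x < a) r -> find (fun x => a <= x) r < size r.
Proof. rewrite -has_find -has_predC => h. apply: sub_has h => x /=; by rewrite -leqNgt. Qed.

Lemma row_ins_rows a P i :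
  size (nth [::] (row_ins a P).1 i) = size (nth [::] P i) + (i == (row_ins a P).2).
Proof.
elim: P a i => [|r P IH] a i /=.
  by case: i => [|[|i]] //=; rewrite nth_nil.
case: ifP => hall /=.
  by case: i => [|i] /=; rewrite ?size_rcons ?addn1 ?addn0.
have hk := find_lt _ _ (negbT hall).
case E: (row_ins _ P) => [L j] /=.
case: i => [|i] /=; first by rewrite size_set_nth addn0; apply/maxn_idPr.
by have := IH (nth 0 r (find (fun x => a <= x) r)) i; rewrite E /= eqSS.
Qed.

Lemma row_ins_all (q : pred nat) a P :
  q a -> (forall i, all q (nth [::] P i)) -> forall i, all q (nth [::] (row_ins a P).1 i).
Proof.
elim: P a => [|r P IH] a qa HP i /=.
  by case: i => [|[|i]] //=; rewrite ?qa // nth_nil.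
have H0 := HP 0; have HS : forall i, all q (nth [::] P i) by move=> i'; exact: (HP i'.+1).
case: ifP => hall /=.
  case: i => [|i] /=; [by rewrite all_rcons qa H0 | exact: HS].
have hk := find_lt _ _ (negbT hall).
case E: (row_ins _ P) => [L j] /=.
case: i => [|i] /=; first by apply: all_set_nth => //; apply: ltnW.
have := IH (nth 0 r (find (fun x => a <= x) r)) _ HS i; rewrite E; apply.
exact: (allP H0 _ (mem_nth 0 hk)).
Qed.

Lemma row_ins_row0 a P :
  nth [::] (row_ins a P).1 0 =
  set_nth 0 (nth [::] P 0) (find (fun x => a <= x) (nth [::] P 0)) a.
Proof.
case: P => [|r P] //=.
case: ifP => hall /=.
  suff -> : find (fun x => a <= x) r = size r by rewrite set_nth_size.
  apply: hasNfind; rewrite -all_predC.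
  by apply: sub_all hall => x /=; rewrite -ltnNge.
by case E: (row_ins _ P).
Qed.

Lemma row_ins_j0 a P :
  ((row_ins a P).2 == 0) = all (fun x => x < a) (nth [::] P 0).
Proof.
case: P => [|r P] //=.
case: ifP => hall //=.
by case E: (row_ins _ P).
Qed.

Lemma nth_map_filter (q : pred nat) (P : seq (seq nat)) i :
  nth [::] (map (filter q) P) i = filter q (nth [::] P i).
Proof. by elim: P i => [|r P IH] [|i] //=; rewrite nth_nil. Qed.

Lemma size_map_filter (q : pred nat) (P : seq (seq nat)) : size (map (filter q) P) = size P.
Proof. exact: size_map. Qed.

Definition loP b (P : tableau) := map (filter (fun x => x < b)) P.
Definition Lr b a P := (row_ins a (loP b P)).1.

Lemma ins_b_j b a P : (ins_b b a P).2 = (row_ins a (loP b P)).2.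
Proof. by rewrite /ins_b; case: (row_ins _ _). Qed.

Lemma ins_b_size b a P : size (ins_b b a P).1 = size (Lr b a P).
Proof. by rewrite /ins_b /Lr /loP; case: (row_ins _ _) => L j /=; rewrite size_map size_iota. Qed.

Lemma ins_b_nth b a P i :
  nth [::] (ins_b b a P).1 i = nth [::] (Lr b a P) i ++ filter (fun x => b <= x) (nth [::] P i).
Proof.
rewrite /ins_b /Lr /loP.
have [sz _] := row_ins_size a (map (filter (fun x => x < b)) P).
move: sz; case: (row_ins _ _) => L j /= sz.
case: (ltnP i (size L)) => hi.
  by rewrite (nth_map 0) ?size_iota // nth_iota // add0n nth_map_filter.
rewrite nth_default ?size_map ?size_iota // nth_default // (@nth_default _ _ P) //.
move: hi; rewrite sz size_map; lia.
Qed.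

Lemma loP_nth b P i : nth [::] (loP b P) i = filter (fun x => x < b) (nth [::] P i).
Proof. exact: nth_map_filter. Qed.

Lemma Lr_lt b a P : a < b -> forall i, all (fun x => x < b) (nth [::] (Lr b a P) i).
Proof.
move=> ab; apply: row_ins_all => // i; rewrite loP_nth.
by apply/allP => x; rewrite mem_filter => /andP[].
Qed.

Lemma KL k a s : pairwise leq s ->
  filter (fun x => x < k) (set_nth 0 s (find (fun x => a <= x) s) a) =
  (if a < k then set_nth 0 (filter (fun x => x < k) s) (find (fun x => a <= x) s) a
   else filter (fun x => x < k) s) /\
  (a < k -> find (fun x => a <= x) s <= size (filter (fun x => x < k) s) /\
     forall i, i < find (fun x => a <= x) s -> nth 0 (filter (fun x => x < k) s) i < a).
Proof.
elim: s => [|x s IH] /=.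
  by move=> _; case: ifP.
move=> /andP[ax ps]; have {IH} [IH1 IH2] := IH ps.
case: (leqP a x) => axx /=.
  have sk : a < k -> x >= k -> filter (fun x => x < k) s = [::].
    move=> ak xk; apply/eqP; rewrite -[_ == _]negbK -has_filter -all_predC.
    apply/allP => z zs /=; have := allP ax z zs; lia.
  case: (ltnP a k) => ak /=.
    split => //; case: (ltnP x k) => xk //=.
    by rewrite sk.
  have -> : (x < k) = false by apply/negbTE; lia.
  done.
case: (ltnP x k) => xk /=.
  rewrite IH1; case: (ltnP a k) => ak; last by [].
  split => //; have [h1 h2] := IH2 ak; split => //.
  by move=> [|i] //= hi; apply: h2.
have ak : (a < k) = false by apply/negbTE; lia.
by rewrite IH1 ak.
Qed.

Lemma PL a s : pairwise leq s -> pairwise leq (set_nth 0 s (find (fun x => a <= x) s) a).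
Proof.
elim: s => [|x s IH] //= /andP[ax ps].
case: (leqP a x) => axx /=.
  rewrite ps andbT; apply/allP => z zs; have := allP ax z zs; lia.
rewrite IH // andbT; apply: all_set_nth => //; first exact: ltnW.
exact: find_size.
Qed.

Definition gc k (S C : seq (nat * nat)) :=
  [&& is_chain C, all (fun p => (p.1 < k) && (k <= p.2)) C & all (fun p => p \in S) C].

Lemma gc_mono k S p C : gc k S C -> gc k (rcons S p) C.
Proof.
case/and3P => h1 h2 h3; apply/and3P; split => //.
by apply: sub_all h3 => x /=; rewrite mem_rcons in_cons => ->; rewrite orbT.
Qed.

Definition chainprop k S (r : seq nat) :=
  forall i, i < size r -> exists C, [/\ gc k S C, size C = i.+1 & (last (0,0) C).1 <= nth 0 r i].

Lemma CL k S r a b idx :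
  chainprop k S r -> a < k -> k <= b -> all (fun x => brsk_order x (a, b)) S ->
  idx <= size r -> (forall i, i < idx -> nth 0 r i < a) ->
  chainprop k (rcons S (a, b)) (set_nth 0 r idx a).
Proof.
move=> H ak kb ord hidx hlt i; rewrite size_set_nth nth_set_nth /= => hi.
case: eqP => [->|ne].
  case: idx hidx hlt {hi} => [|i'] hidx hlt.
    exists [:: (a, b)]; split => //=; rewrite /gc /= ak kb mem_rcons in_cons eqxx.
    by rewrite /is_chain.
  have [C [gC sC lC]] := H i' hidx.
  have hl := hlt i' (ltnSn _).
  exists (rcons C (a, b)); split; last by rewrite last_rcons.
    case/and3P: gC => c1 c2 c3; apply/and3P; split.
    - case: C sC lC c1 c2 c3 => [|c C] // _ lC c1 c2 c3.
      rewrite /is_chain rcons_cons /= rcons_path; rewrite /is_chain /= in c1; rewrite c1 /=.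
      have lS : last c C \in S by apply: (allP c3); exact: mem_last.
      have := allP ord _ lS; rewrite /brsk_order /chain_rel /=.
      rewrite /= in lC. move: (last c C) lC => l lC.
      move: (nth 0 r i') lC hl => v lC hl; case: l lC => l1 l2 /= lC.
      case/orP => [bl|/andP[/eqP e al]]; apply/andP; split; lia.
    - by rewrite all_rcons /= ak kb.
    - rewrite all_rcons mem_rcons in_cons eqxx /=.
      by apply: sub_all c3 => x /=; rewrite mem_rcons in_cons => ->; rewrite orbT.
  by rewrite size_rcons sC.
have hi' : i < size r by move: hi ne; lia.
have [C [gC sC lC]] := H i hi'.
by exists C; split => //; apply: gc_mono.
Qed.

Definition rk k (P : tableau) := filter (fun x => x < k) (nth [::] P 0).

Definition Inv k (S : seq (nat * nat)) (PQ : bitableau) : Prop :=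
 [/\ size PQ.1 = size PQ.2,
     forall i, size (nth [::] PQ.1 i) = size (nth [::] PQ.2 i),
     forall i, cnt k (nth [::] PQ.1 i) <= cnt k (nth [::] PQ.2 i),
     exists C, gc k S C /\ cnt k (nth [::] PQ.2 0) <= cnt k (nth [::] PQ.1 0) + size C
   & all (fun p => k <= p.2) S ->
     [/\ forall i, all (fun x => k <= x) (nth [::] PQ.2 i),
         pairwise leq (nth [::] PQ.1 0)
       & chainprop k S (rk k PQ.1)]].

Lemma step_eq PQ a b : brsk_step PQ (a, b) =
  ((ins_b b a PQ.1).1, set_nth [::] PQ.2 (ins_b b a PQ.1).2 (b :: nth [::] PQ.2 (ins_b b a PQ.1).2)).
Proof. by rewrite /brsk_step; case: (ins_b b a PQ.1). Qed.

Lemma size_filter_split b s :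
  size (filter (fun x => x < b) s) + size (filter (fun x => b <= x) s) = size s.
Proof. by elim: s => //= x s IH; case: (ltnP x b) => /= _; rewrite -IH; lia. Qed.

Lemma cnt_split k s : size (filter (fun x => x < k) s) + cnt k s = size s.
Proof. by elim: s => //= x s IH; rewrite /cnt /=; case: (ltnP x k) => /= _; rewrite -IH /cnt; lia. Qed.

Lemma cnt_filter_ge k b s : b < k -> cnt k (filter (fun x => b <= x) s) = cnt k s.
Proof.
move=> bk; elim: s => //= x s IH; rewrite /cnt /=.
case: (leqP b x) => bx /=; rewrite -/(cnt k _) IH //.
have -> : (k <= x) = false by apply/negbTE; lia.
done.
Qed.

Lemma filter_lt_ge k b s : k <= b -> filter (fun x => x < k) (filter (fun x => b <= x) s) = [::].
Proof.
move=> kb; elim: s => //= x s IH; case: (leqP b x) => bx //=.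
have -> : (x < k) = false by apply/negbTE; lia.
done.
Qed.

Lemma filter_lt_lt k b s : k <= b -> filter (fun x => x < k) (filter (fun x => x < b) s) = filter (fun x => x < k) s.
Proof.
move=> kb; elim: s => //= x s IH; case: (ltnP x b) => bx /=; rewrite IH //.
have -> : (x < k) = false by apply/negbTE; lia.
done.
Qed.

Lemma cnt_cons k b s : cnt k (b :: s) = (k <= b) + cnt k s.
Proof. by []. Qed.

Lemma chainprop_mono k S p r : chainprop k S r -> chainprop k (rcons S p) r.
Proof. by move=> H i hi; have [C [g s l]] := H i hi; exists C; split => //; apply: gc_mono. Qed.

Lemma J_of_ph1 k S P Q :
  all (fun x => k <= x) (nth [::] Q 0) ->
  size (nth [::] P 0) = size (nth [::] Q 0) ->
  chainprop k S (rk k P) ->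
  exists C, gc k S C /\ cnt k (nth [::] Q 0) <= cnt k (nth [::] P 0) + size C.
Proof.
move=> Qk sz cp.
rewrite (cnt_all _ _ Qk) -sz -(cnt_split k (nth [::] P 0)) -/(rk k P).
case E: (size (rk k P)) => [|n].
  by exists [::]; split => //; rewrite add0n addn0.
have [C [g s _]] := cp n ltac:(by rewrite E).
by exists C; split => //; rewrite s addnC.
Qed.

Lemma Inv_step k S P Q a b : a < b -> all (fun x => brsk_order x (a, b)) S ->
  Inv k S (P, Q) -> Inv k (rcons S (a, b)) (brsk_step (P, Q) (a, b)).
Proof.
move=> ab ord HI; rewrite step_eq; case: HI => /= sPQ rows cnts [C0 [gC0 hC0]] ph1.
have hJ := ins_b_j b a P.
have nthP' := ins_b_nth b a P.
have hszP' := ins_b_size b a P.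
move: (ins_b b a P) hJ nthP' hszP' => [P' J] /= hJ nthP' hszP'.
have [szL Jle] := row_ins_size a (loP b P).
have rowsL := row_ins_rows a (loP b P).
set Q' := set_nth [::] Q J (b :: nth [::] Q J).
have nthQ' : forall i, nth [::] Q' i = if i == J then b :: nth [::] Q J else nth [::] Q i.
  by move=> i; rewrite /Q' nth_set_nth /=.
have rowsz : forall i, size (nth [::] P' i) = size (nth [::] Q' i).
  move=> i; rewrite nthP' size_cat /Lr rowsL loP_nth -hJ nthQ'.
  have := size_filter_split b (nth [::] P i); have := rows i.
  case: eqP => [->|_] /=; lia.
have szeq : size P' = size Q'.
  rewrite hszP' /Lr szL /Q' size_set_nth -hJ /loP size_map sPQ; lia.
have [kb|bk] := leqP k b.
  have allS : all (fun p => k <= p.2) S.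
    apply/allP => x xS; have := allP ord x xS; rewrite /brsk_order /=.
    case/orP => [h|/andP[/eqP e _]]; lia.
  have [Qk pw cp] := ph1 allS.
  have Qk' : forall i, all (fun x => k <= x) (nth [::] Q' i).
    by move=> i; rewrite nthQ'; case: eqP => _ //=; rewrite kb Qk.
  set lo0 := filter (fun x => x < b) (nth [::] P 0).
  have P'0 : nth [::] P' 0 = set_nth 0 lo0 (find (fun x => a <= x) lo0) a ++ filter (fun x => b <= x) (nth [::] P 0).
    by rewrite nthP' /Lr row_ins_row0 loP_nth.
  have pwlo : pairwise leq lo0 by apply: pairwise_filter.
  have lob : all (fun x => x < b) (set_nth 0 lo0 (find (fun x => a <= x) lo0) a).
    apply: all_set_nth => //; last exact: find_size.
    by apply/allP => x; rewrite mem_filter => /andP[].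
  have pw' : pairwise leq (nth [::] P' 0).
    rewrite P'0 pairwise_cat; apply/and3P; split; [|exact: PL|exact: pairwise_filter].
    apply/allrelP => x y hx hy; have := allP lob x hx.
    rewrite mem_filter in hy; case/andP: hy => hy _; lia.
  have [KL1 KL2] := KL k a lo0 pwlo.
  have rk' : rk k P' = filter (fun x => x < k) (set_nth 0 lo0 (find (fun x => a <= x) lo0) a).
    by rewrite /rk P'0 filter_cat filter_lt_ge // cats0.
  have rkP : rk k P = filter (fun x => x < k) lo0 by rewrite /rk /lo0 filter_lt_lt.
  have cp' : chainprop k (rcons S (a, b)) (rk k P').
    rewrite rk' KL1; case: ifP => ak; last by rewrite -rkP; apply: chainprop_mono.
    have [h1 h2] := KL2 ak; rewrite -rkP in h1 h2 *.
    by apply: CL.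
  have ph1' : all (fun p => k <= p.2) (rcons S (a, b)) ->
     [/\ forall i, all (fun x => k <= x) (nth [::] Q' i), pairwise leq (nth [::] P' 0)
       & chainprop k (rcons S (a, b)) (rk k P')] by [].
  split => //=.
  - move=> i; rewrite (cnt_all _ _ (Qk' i)) -rowsz; exact: cnt_size.
  - exact: J_of_ph1.
have cP' : forall i, cnt k (nth [::] P' i) = cnt k (nth [::] P i).
  move=> i; rewrite nthP' cnt_cat cnt_filter_ge // cnt_all0 //.
  by apply: sub_all (Lr_lt _ _ _ ab i) => x /= xb; lia.
have cQ' : forall i, cnt k (nth [::] Q' i) = cnt k (nth [::] Q i).
  move=> i; rewrite nthQ'; case: eqP => [->|_] //.
  rewrite cnt_cons; have -> : (k <= b) = false by apply/negbTE; lia.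
  done.
split => //=.
- by move=> i; rewrite cP' cQ'.
- by exists C0; split; [apply: gc_mono | rewrite cP' cQ'].
- by rewrite all_rcons /= leqNgt bk.
Qed.

Lemma bo_total : total brsk_order.
Proof.
move=> [x1 x2] [y1 y2]; rewrite /brsk_order /=.
have [h|h|h] := ltngtP y2 x2.
- by [].
- by [].
- by case: (leqP y1 x1) => //= /ltnW ->.
Qed.

Lemma bo_trans : transitive brsk_order.
Proof.
move=> [y1 y2] [x1 x2] [z1 z2]; rewrite /brsk_order /=.
move=> H1 H2.
have h1 : y2 < x2 \/ (x2 = y2 /\ y1 <= x1).
  by case/orP: H1 => [h|/andP[/eqP e h]]; [left|right].
have h2 : z2 < y2 \/ (y2 = z2 /\ z1 <= y1).
  by case/orP: H2 => [h|/andP[/eqP e h]]; [left|right].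
case: (ltnP z2 x2) => h //=.
apply/andP; split; [apply/eqP|]; lia.
Qed.

Lemma Inv_init k : Inv k [::] ([::], [::]).
Proof.
split => /=.
- by [].
- by move=> i; rewrite nth_nil.
- by move=> i; rewrite nth_nil.
- by exists [::].
- by move=> _; split => // i; rewrite nth_nil.
Qed.

Lemma Inv_fold k s : pairwise brsk_order s -> all (fun p => p.1 < p.2) s ->
  Inv k s (foldl brsk_step ([::], [::]) s).
Proof.
elim/last_ind: s => [|s [a b] IH]; first by move=> _ _; exact: Inv_init.
rewrite pairwise_rcons all_rcons foldl_rcons => /andP[ord ps] /andP[ab ns].
case E: (foldl _ _ s) => [P Q].
apply: Inv_step => //; rewrite -E; exact: IH.
Qed.

Lemma Inv_neg k V : negative V -> Inv k (sort brsk_order V) (brsk_neg V).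
Proof.
move=> nV; apply: Inv_fold.
  by rewrite -sorted_pairwise; [apply: sort_sorted; exact: bo_total | exact: bo_trans].
by apply/allP => x; rewrite mem_sort => xV; exact: (allP nV).
Qed.

Lemma cnt_map_le (X : seq (nat * nat)) (f g : nat * nat -> nat) k :
  (forall x, x \in X -> f x <= g x) -> cnt k (map f X) <= cnt k (map g X).
Proof.
elim: X => //= x X IH H; rewrite /cnt /= -/(cnt k _) -/(cnt k _).
have h := H x (mem_head _ _).
have := IH (fun y hy => H y (mem_behead (s := x :: X) hy)).
move: (cnt k (map f X)) (cnt k (map g X)) => m n.
case: (leqP k (f x)) => a; case: (leqP k (g x)) => b /=; lia.
Qed.

Lemma cnt_fstm0 k C : all (fun p => (p.1 < k) && (k <= p.2)) C -> cnt k (fstm C) = 0.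
Proof.
move=> H; apply: cnt_all0; rewrite all_map; apply: sub_all H => x /= /andP[] //.
Qed.

Lemma cnt_sndm k C : all (fun p => (p.1 < k) && (k <= p.2)) C -> cnt k (sndm C) = size C.
Proof.
move=> H; rewrite (@cnt_all k) ?size_map // all_map; apply: sub_all H => x /= /andP[] //.
Qed.

Lemma cnt_rev k s : cnt k (rev s) = cnt k s.
Proof. exact: count_rev. Qed.

Lemma mle2_cnt T C k : mle2 T C ->
  cnt k (fstm T) + cnt k (sndm C) <= cnt k (fstm C) + cnt k (sndm T).
Proof. by move=> /mle_cnt /(_ k); rewrite /mle2 !cnt_cat. Qed.

Lemma last_nth (s : seq (seq nat)) : last [::] s = nth [::] s (size s).-1.
Proof. by rewrite nth_last. Qed.

Lemma head_rev (s : seq (seq nat)) : head [::] (rev s) = last [::] s.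
Proof. by case/lastP: s => // s x; rewrite rev_rcons last_rcons. Qed.

Lemma fstm_swap C : fstm (rev (map swap_pt C)) = rev (sndm C).
Proof. by rewrite /fstm /sndm map_rev -map_comp. Qed.

Lemma sndm_swap C : sndm (rev (map swap_pt C)) = rev (fstm C).
Proof. by rewrite /fstm /sndm map_rev -map_comp. Qed.

Theorem lemma7p2 (T W U : seq (nat * nat)) :
  uniq T -> pos_entries T -> negative T ->
  uniq W -> pos_entries W -> positive W ->
  pos_entries U -> U != [::] -> nonvanishing U ->
  bounded_ms T W U ->
  bounded_bt T W (brsk U).
Proof.
move=> _ _ negT _ _ posW _ _ _ bnd.
have negVm : negative (neg_part U) by apply/allP => x; rewrite mem_filter => /andP[].
have negVp : negative (iota_ms (pos_part U)).
  by apply/allP => x /mapP[y]; rewrite mem_filter => /andP[h _] ->.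
have HmU : forall C : seq (nat * nat), {subset C <= sort brsk_order (neg_part U)} -> {subset C <= U}.
  by move=> C H x /H; rewrite mem_sort mem_filter => /andP[].
have HpU : forall C : seq (nat * nat), {subset C <= sort brsk_order (iota_ms (pos_part U))} ->
    {subset rev (map swap_pt C) <= U}.
  move=> C H x; rewrite mem_rev => /mapP[y /H]; rewrite mem_sort => /mapP[z].
  by rewrite mem_filter => /andP[_ zU] -> ->; case: z zU.
have Tle : forall k, cnt k (fstm T) <= cnt k (sndm T).
  by move=> k; apply: cnt_map_le => x xT; have := allP negT x xT; apply: ltnW.
have Wle : forall k, cnt k (sndm W) <= cnt k (fstm W).
  by move=> k; apply: cnt_map_le => x xW; have := allP posW x xW; apply: ltnW.
have Hm := fun k => Inv_neg k _ negVm.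
have Hp := fun k => Inv_neg k _ negVp.
rewrite /bounded_bt /brsk /brsk_pos /iota_bt /=.
move: (sort brsk_order (neg_part U)) (brsk_neg (neg_part U)) HmU Hm => Sm [Pm Qm] HmU Hm.
move: (sort brsk_order (iota_ms (pos_part U))) (brsk_neg (iota_ms (pos_part U))) HpU Hp
  => Sp [P' Q'] HpU Hp.
have [/= szm rowm _ _ _] := Hm 0.
have [/= szp rowp _ _ _] := Hp 0.
split.
- rewrite /mdiff_le; case: Pm Qm szm rowm Hm => [|x Pm] [|y Qm] //= szm rowm Hm.
    rewrite !head_rev; apply: cnt_mle.
      rewrite !size_cat !last_nth szp rowp /fstm /sndm !size_map; lia.
    move=> k; have [_ _ c _ _] := Hp k; rewrite /= in c.
    rewrite !cnt_cat !last_nth szp; have := c (size Q').-1; have := Tle k.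
    move: (cnt k _) (cnt k _) (cnt k _) (cnt k _) => n1 n2 n3 n4; lia.
  apply: cnt_mle.
    by rewrite !size_cat (rowm 0) /= /fstm /sndm !size_map addnC.
  move=> k; have [_ _ _ [C [gC hC]] _] := Hm k; rewrite /= in hC.
  case/and3P: gC => ch allC memC.
  have [b1 _] := bnd C ch (HmU C (fun z hz => allP memC z hz)).
  have := mle2_cnt _ _ k b1; rewrite (cnt_fstm0 k C allC) (cnt_sndm k C allC).
  rewrite !cnt_cat; move: hC; move: (cnt k _) (cnt k _) (cnt k _) (cnt k _) => n1 n2 n3 n4; lia.
- rewrite /mdiff_le; case: Q' P' szp rowp Hp HpU => [|y Q'] [|x P'] //= szp rowp Hp HpU.
    rewrite !cats0; apply: cnt_mle.
      rewrite !size_cat !last_nth szm rowm /fstm /sndm !size_map; lia.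
    move=> k; have [_ _ c _ _] := Hm k; rewrite /= in c.
    rewrite !cnt_cat !last_nth szm; have := c (size Qm).-1; have := Wle k.
    move: (cnt k _) (cnt k _) (cnt k _) (cnt k _) => n1 n2 n3 n4; lia.
  rewrite !rev_cons !last_cat !last_rcons; apply: cnt_mle.
    have r0 := rowp 0; rewrite /= in r0. by rewrite !size_cat r0 /fstm /sndm !size_map addnC.
  move=> k; have [_ _ _ [C [gC hC]] _] := Hp k; rewrite /= in hC.
  case/and3P: gC => ch allC memC.
  have chC : is_chain (rev (map swap_pt C)).
    rewrite /is_chain rev_sorted sorted_map; apply: sub_sorted ch.
    by move=> [u1 u2] [v1 v2]; rewrite /relpre /chain_rel /= andbC.
  have [_ b2] := bnd _ chC (HpU C (fun z hz => allP memC z hz)).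
  have := mle2_cnt _ _ k b2.
  rewrite fstm_swap sndm_swap !cnt_rev (cnt_sndm k C allC) (cnt_fstm0 k C allC) !cnt_cat.
  move: hC; move: (cnt k _) (cnt k _) (cnt k _) (cnt k _) => n1 n2 n3 n4; lia.
Qed.
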